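(* Let $X$ be a separable Banach space over $\mathbb{K}\in\{\mathbb{R},\mathbb{C}\}$ and $T\colon X\to X$ a bounded linear operator. If there exists a uniformly Li-Yorke scrambled subset of $X$ which has the Baire property and is of second category, then the whole space $X$ is uniformly Li-Yorke scrambled for $T$.
   Context: A subset $S\subset X$ with at least two points is uniformly Li-Yorke scrambled for $T$ if there exist sequences $\{p_n\}$, $\{q_n\}$ in $\mathbb{N}$ such that for all distinct $x,y\in S$: $\lim_n\|T^{p_n}x-T^{p_n}y\|=0$ and $\lim_n\|T^{q_n}x-T^{q_n}y\|=\infty$. A set is of first category if its complement contains a dense $G_\delta$ set, and of second category otherwise. Sets with the Baire property form the smallest $\sigma$-algebra containing all open sets and all sets of first category. *)

(* Defs.v *)
From HB Require Import structures.
From mathcomp Require Import all_boot all_order all_algebra.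
From mathcomp Require Import all_classical all_reals all_analysis.
Set Implicit Arguments. Unset Strict Implicit. Unset Printing Implicit Defensive.
Import Order.TTheory GRing.Theory Num.Theory.
Import numFieldNormedType.Exports.
Local Open Scope classical_set_scope.
Local Open Scope ring_scope.

Definition separable_space (T : topologicalType) : Prop :=
  exists D : set T, countable D /\ dense D.

Definition bounded_operator (R : realType) (X : normedModType R)
  (T : X -> X) : Prop :=
  exists M : R, forall x : X, `|T x| <= M * `|x|.

Definition G_delta (T : topologicalType) (G : set T) : Prop :=
  exists U : nat -> set T, (forall n, open (U n)) /\ G = \bigcap_n U n.

Definition first_category (T : topologicalType) (A : set T) : Prop :=
  exists G : set T, G_delta G /\ dense G /\ G `<=` ~` A.

Definition second_category (T : topologicalType) (A : set T) : Prop :=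
  ~ first_category A.

Definition baire_property (T : topologicalType) (A : set T) : Prop :=
  <<s [set B | open B \/ first_category B] >> A.

Definition uniformly_LY_scrambled (R : realType) (X : normedModType R)
  (T : X -> X) (S : set X) : Prop :=
  (exists x y, S x /\ S y /\ x <> y) /\
  exists p q : nat -> nat,
    forall x y, S x -> S y -> x <> y ->
      ((fun n => `|iter (p n) T x - iter (p n) T y|) @ \oo --> (0 : R)) /\
      ((fun n => `|iter (q n) T x - iter (q n) T y|) @ \oo --> +oo).

(* Main.v *)
Require Import Defs.
From HB Require Import structures.
From mathcomp Require Import all_boot all_order all_algebra.
From mathcomp Require Import all_classical all_reals all_analysis.
From mathcomp Require Import lra ring.
Import Order.TTheory GRing.Theory Num.Theory.
Import numFieldNormedType.Exports.
Local Open Scope classical_set_scope.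
Local Open Scope ring_scope.

Section Aux.
Variables (R : realType) (X : completeNormedModType R).

Definition DG (G : set X) := G_delta G /\ dense G.

Lemma dense_sub (A B : set X) : dense A -> A `<=` B -> dense B.
Proof.
move=> dA AB O O0 oO; have [x [Ox Ax]] := dA O O0 oO; exists x; split=> //.
exact: AB.
Qed.

Lemma DG_open (O : set X) : open O -> dense O -> DG O.
Proof.
move=> oO dO; split=> //; exists (fun=> O); split=> //.
by rewrite bigcap_const.
Qed.

Lemma DG_bigcap (Gk : nat -> set X) : (forall k, DG (Gk k)) -> DG (\bigcap_k Gk k).
Proof.
move=> H.
have /choice[V HV] : forall k, exists U : nat -> set X,
   (forall n, open (U n)) /\ Gk k = \bigcap_n U n.
  by move=> k; have [[U [oU ->]] _] := H k; exists U.
pose f (m : nat) : nat * nat := odflt (0%N, 0%N) (unpickle m).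
pose W m := V (f m).1 (f m).2.
have GW k n : Gk k `<=` V k n.
  by move=> x; rewrite (proj2 (HV k)) => /(_ n I).
have EW : \bigcap_k Gk k = \bigcap_m W m.
  apply/seteqP; split=> x Hx.
    by move=> m _; apply: (GW (f m).1 (f m).2); exact: Hx.
  move=> k _; rewrite (proj2 (HV k)) => n _.
  have := Hx (pickle (k, n)) I; by rewrite /W /f pickleK.
have oW m : open (W m) /\ dense (W m).
  split; first exact: (proj1 (HV _)).
  apply: (@dense_sub (Gk (f m).1) (W m)); [exact: (proj2 (H (f m).1))|exact: GW].
split; last by rewrite EW; apply: Baire.
by exists W; split=> // m; exact: (proj1 (oW m)).
Qed.

Lemma DG_I (A B : set X) : DG A -> DG B -> DG (A `&` B).
Proof.
move=> dA dB.
have -> : A `&` B = \bigcap_k (if k is 0%N then A else B).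
  apply/seteqP; split=> x.
    by move=> [Ax Bx] [|k] _.
  by move=> H; split; [exact: (H 0%N I)|exact: (H 1%N I)].
by apply: DG_bigcap => -[|k].
Qed.

Lemma open_shift (O : set X) (c : X) : open O -> open [set y | O (y + c)].
Proof.
move=> oO.
have -> : [set y | O (y + c)] = (fun y => y + c) @^-1` O by [].
apply: open_comp => // y _.
apply: cvgD; [exact: cvg_id | exact: cvg_cst].
Qed.

Lemma DG_shift (G : set X) (c : X) : DG G -> DG [set y | G (y + c)].
Proof.
move=> [[V [oV EG]] dG].
have dV n : dense (V n) by apply: (@dense_sub G (V n) dG); rewrite EG => x; apply.
have -> : [set y | G (y + c)] = \bigcap_n [set y | V n (y + c)].
  by rewrite EG; apply/seteqP; split=> x /= H n _; exact: H.
apply: DG_bigcap => n; apply: DG_open; first exact: open_shift.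
move=> O [x Ox] oO.
have ne : [set y | O (y - c)] !=set0 by exists (x + c); rewrite /= addrK.
have [y [/= Oy Vy]] := dV n [set y | O (y - c)] ne (open_shift O (- c) oO).
by exists (y - c); split => //=; rewrite subrK.
Qed.


Definition BP (A : set X) := exists U G, open U /\ DG G /\ A `&` G = U `&` G.

Lemma DGT : DG setT.
Proof. apply: DG_open; first exact: openT. by move=> O [x Ox] _; exists x. Qed.

Lemma dense_bd (U : set X) : open U -> dense (U `|` ~` closure U).
Proof.
move=> oU O [x Ox] oO.
have [[y [Oy Uy]]|H] := pselect (O `&` U !=set0).
  by exists y; split => //; left.
exists x; split=> //; right => cx.
have := cx O (open_nbhs_nbhs (conj oO Ox)).
move=> [y [Uy Oy]]; apply: H; by exists y.
Qed.

Lemma BP_sigma : sigma_algebra setT BP.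
Proof.
split.
- exists set0, setT; split; first exact: open0.
  by split; [exact: DGT| rewrite !set0I].
- move=> A [U [G [oU [dG E]]]].
  exists (~` closure U), (G `&` (U `|` ~` closure U)); split.
    by rewrite openC; exact: closed_closure.
  split.
    apply: DG_I => //; apply: DG_open; last exact: dense_bd.
    by apply: openU => //; rewrite openC; exact: closed_closure.
  apply/seteqP; split=> x [Ax [Gx Ux]].
    split; last by split.
    case: Ux => // Ux; exfalso.
    have : (U `&` G) x by [].
    rewrite -E => -[Ax' _]; by case: Ax.
  split; last by split.
  split=> // Ax'.
  have : (A `&` G) x by [].
  rewrite E => -[Ux' _]; apply: Ax; exact: subset_closure.
- move=> A HA.
  have /choice[UG HUG] : forall n, exists UG : set X * set X,
      open UG.1 /\ DG UG.2 /\ A n `&` UG.2 = UG.1 `&` UG.2.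
    by move=> n; have [U [G H]] := HA n; exists (U, G).
  exists (\bigcup_n (UG n).1), (\bigcap_n (UG n).2); split.
    by apply: bigcup_open => n _; exact: (proj1 (HUG n)).
  split; first by apply: DG_bigcap => n; exact: (proj1 (proj2 (HUG n))).
  apply/seteqP; split=> x [[n _ Ax] Gx]; split=> //.
    have : (A n `&` (UG n).2) x by split=> //; exact: Gx.
    by rewrite (proj2 (proj2 (HUG n))) => -[? _]; exists n.
  have : ((UG n).1 `&` (UG n).2) x by split=> //; exact: Gx.
  by rewrite -(proj2 (proj2 (HUG n))) => -[? _]; exists n.
Qed.

Lemma baire_BP (A : set X) : baire_property A -> BP A.
Proof.
apply: (smallest_sub BP_sigma) => B [oB|[G [dG [gG GB]]]].
  by exists B, setT; split=> //; split; [exact: DGT|].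
exists set0, G; split; first exact: open0.
split; first by split.
rewrite set0I; apply/seteqP; split=> x // [Bx Gx]; exact: (GB x Gx Bx).
Qed.


Lemma pettis (S : set X) : BP S -> second_category S ->
  exists2 r : R, 0 < r & forall z : X, `|z| < r -> exists x, S x /\ S (x - z).
Proof.
move=> [U [G [oU [dG E]]]] sS.
have [[a Ua]|U0] := pselect (U !=set0); last first.
  exfalso; apply: sS; exists G; split; first exact: (proj1 dG).
  split; first exact: (proj2 dG).
  move=> x Gx Sx; apply: U0; exists x.
  have : (S `&` G) x by [].
  by rewrite E => -[].
have /nbhs_ballP[r r0 rU] : nbhs a U by apply: open_nbhs_nbhs.
exists (r / 2); first by rewrite divr_gt0.
move=> z zr.
have dG' : DG (G `&` [set y | G (y + - z)]) by apply: DG_I => //; exact: DG_shift.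
have ne : ball a (r / 2) !=set0 by exists a; apply: ballxx; rewrite divr_gt0.
have [y [By [Gy Gyz]]] := proj2 dG' _ ne (ball_open _ _).
have SU v : U v -> G v -> S v.
  move=> Uv Gv; have : (U `&` G) v by [].
  by rewrite -E => -[].
have r0' : 0 < r := r0.
have r2 : r / 2 <= r by lra.
exists y; split.
  by apply: SU => //; apply: rU; exact: (le_ball r2).
apply: SU => //; apply: rU; rewrite -ball_normE /= .
move: By; rewrite -ball_normE /= => By.
rewrite opprB addrCA (le_lt_trans (ler_normD _ _)) //.
lra.
Qed.

End Aux.

Lemma iterB (R : realType) (X : completeNormedModType R) (T : {linear X -> X}) k (a b : X) :
  iter k T (a - b) = iter k T a - iter k T b.
Proof. by elim: k => //= k ->; rewrite linearB. Qed.

Lemma iterZ (R : realType) (X : completeNormedModType R) (T : {linear X -> X}) k (c : R) (a : X) :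
  iter k T (c *: a) = c *: iter k T a.
Proof. by elim: k => //= k ->; rewrite linearZ. Qed.

Theorem corollary3p13 (R : realType) (X : completeNormedModType R)
  (T : {linear X -> X}) :
  separable_space X ->
  bounded_operator T ->
  (exists S : set X,
      uniformly_LY_scrambled T S /\ baire_property S /\ second_category S) ->
  uniformly_LY_scrambled T setT.
Proof.
move=> _ _ [S [[[x0 [y0 [Sx0 [Sy0 nxy]]]] [p [q Hpq]]] [bS sS]]].
have [r r0 HP] := @pettis R X S (@baire_BP R X S bS) sS.
split; first by exists x0, y0.
exists p, q => x y _ _ nxy'.
set z := x - y.
have z0 : z != 0 by rewrite subr_eq0; apply/eqP.
have nz0 : 0 < `|z| by rewrite normr_gt0.
set c := r / (2 * `|z|).
have c0 : 0 < c by rewrite divr_gt0 // mulr_gt0.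
set w := c *: z.
have wr : `|w| < r.
  have cz : c * `|z| = r / 2.
    rewrite /c; field; by rewrite gt_eqF.
  rewrite normrZ gtr0_norm // cz; lra.
have [x' [Sx' Sx'w]] := HP w wr.
have w0 : w != 0 by rewrite scaler_eq0 negb_or z0 gt_eqF.
have nx : x' <> x' - w.
  move=> /eqP; rewrite -subr_eq0 opprB addrCA subrr addr0; exact/negP.
have [H1 H2] := Hpq _ _ Sx' Sx'w nx.
have E k : `|iter k T x - iter k T y| = c^-1 * `|iter k T x' - iter k T (x' - w)|.
  rewrite -!iterB opprB addrCA subrr addr0 iterZ normrZ gtr0_norm // mulKf ?gt_eqF //.
split.
  have -> : (fun n => `|iter (p n) T x - iter (p n) T y|) =
    (fun n => c^-1 * `|iter (p n) T x' - iter (p n) T (x' - w)|).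
    by apply: funext => n; rewrite E.
  rewrite -(mulr0 c^-1); exact: cvgMl_tmp.
have -> : (fun n => `|iter (q n) T x - iter (q n) T y|) =
  (fun n => c^-1 * `|iter (q n) T x' - iter (q n) T (x' - w)|).
  by apply: funext => n; rewrite E.
apply/cvgryPge => A.
move/cvgryPge: H2 => /(_ (c * A)); apply: filterS => n hn.
have cn0 : c != 0 by rewrite gt_eqF.
rewrite -[A](mulKf cn0); apply: ler_wpM2l => //.
by rewrite invr_ge0 ltW.
Qed.
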